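(* Let $\beta_0$ and $\beta_1$ be two $1$-forms on $D^2$ such that $\beta_0=\beta_1$ in a neighborhood of $\partial D^2$ and $d\beta_0=d\beta_1=\omega>0$. Then there exists a contact $1$-form $\alpha$ with Reeb vector field $R_\alpha$ on $[-1,1]\times D^2$, with coordinates $(t,x)$ where $t\in[-1,1]$ and $x\in D^2$, such that, for a small positive number $\varepsilon$: (1) $\alpha=dt+\varepsilon\beta_0$ in a neighborhood of $\{-1\}\times D^2$; (2) $\alpha=dt+\varepsilon\beta_1$ in a neighborhood of $\{1\}\times D^2$; (3) $R_\alpha$ is collinear to $\partial_t$ on $[-1,1]\times D^2$; (4) $R_\alpha=\partial_t$ in a neighborhood of $[-1,1]\times\partial D^2$.
   Context: The Reeb vector field $R_\alpha$ of a contact form $\alpha$ is defined by $d\alpha(R_\alpha,\cdot)=0$ and $\alpha(R_\alpha)=1$. A contact form on the $3$-manifold $[-1,1]\times D^2$ means $\alpha\wedge d\alpha>0$ with respect to the product orientation. *)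

(* Defs.v *)
From Stdlib Require Import Reals List.
From Coquelicot Require Import Coquelicot.
Open Scope R_scope.

Definition fun2 := R -> R -> R.

(* partial derivative in direction i (0 : x, otherwise : y) *)
Definition pd2 (i : nat) (f : fun2) : fun2 := fun x y =>
  match i with
  | O => Derive (fun s => f s y) x
  | _ => Derive (fun s => f x s) y
  end.

Definition ex_pd2 (i : nat) (f : fun2) (x y : R) : Prop :=
  match i with
  | O => ex_derive (fun s => f s y) x
  | _ => ex_derive (fun s => f x s) y
  end.

Fixpoint iter_pd2 (l : list nat) (f : fun2) : fun2 :=
  match l with nil => f | i :: l' => pd2 i (iter_pd2 l' f) end.

Definition smooth2 (f : fun2) : Prop :=
  forall l : list nat,
    (forall i x y, ex_pd2 i (iter_pd2 l f) x y) /\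
    (forall p : R * R, continuous (fun q : R * R => iter_pd2 l f (fst q) (snd q)) p).

Definition fun3 := R -> R -> R -> R.

(* partial derivative in direction i (0 : t, 1 : x, otherwise : y) *)
Definition pd3 (i : nat) (f : fun3) : fun3 := fun t x y =>
  match i with
  | O => Derive (fun s => f s x y) t
  | S O => Derive (fun s => f t s y) x
  | _ => Derive (fun s => f t x s) y
  end.

Definition ex_pd3 (i : nat) (f : fun3) (t x y : R) : Prop :=
  match i with
  | O => ex_derive (fun s => f s x y) t
  | S O => ex_derive (fun s => f t s y) x
  | _ => ex_derive (fun s => f t x s) y
  end.

Fixpoint iter_pd3 (l : list nat) (f : fun3) : fun3 :=
  match l with nil => f | i :: l' => pd3 i (iter_pd3 l' f) end.

Definition smooth3 (f : fun3) : Prop :=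
  forall l : list nat,
    (forall i t x y, ex_pd3 i (iter_pd3 l f) t x y) /\
    (forall p : R * (R * R),
        continuous (fun q : R * (R * R) => iter_pd3 l f (fst q) (fst (snd q)) (snd (snd q))) p).

Definition in_disk (x y : R) : Prop := x ^ 2 + y ^ 2 <= 1.
Definition in_cyl (t x y : R) : Prop := -1 <= t <= 1 /\ in_disk x y.

(* A 1-form on D^2: beta = P dx + Q dy (smooth, given on R^2).
   d beta = (dQ/dx - dP/dy) dx /\ dy ; we record its coefficient. *)
Definition dcoef2 (P Q : fun2) : fun2 := fun x y => pd2 0 Q x y - pd2 1 P x y.

(* A 1-form on [-1,1] x D^2: alpha = a dt + b dx + c dy. *)
Definition vec3 := (R * R * R)%type.

Definition form_eval (a b c : fun3) (t x y : R) (u : vec3) : R :=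
  let '(u0, u1, u2) := u in a t x y * u0 + b t x y * u1 + c t x y * u2.

Definition dform_eval (a b c : fun3) (t x y : R) (u v : vec3) : R :=
  let '(u0, u1, u2) := u in
  let '(v0, v1, v2) := v in
    (pd3 0 b t x y - pd3 1 a t x y) * (u0 * v1 - u1 * v0)
  + (pd3 0 c t x y - pd3 2 a t x y) * (u0 * v2 - u2 * v0)
  + (pd3 1 c t x y - pd3 2 b t x y) * (u1 * v2 - u2 * v1).

Definition e_t : vec3 := (1, 0, 0).
Definition e_x : vec3 := (0, 1, 0).
Definition e_y : vec3 := (0, 0, 1).

(* (alpha /\ d alpha)(d_t, d_x, d_y) *)
Definition contact_density (a b c : fun3) (t x y : R) : R :=
    form_eval a b c t x y e_t * dform_eval a b c t x y e_x e_y
  - form_eval a b c t x y e_x * dform_eval a b c t x y e_t e_y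
  + form_eval a b c t x y e_y * dform_eval a b c t x y e_t e_x.

(* alpha is a contact form on [-1,1] x D^2 (positive w.r.t. product
   orientation dt /\ dx /\ dy) *)
Definition is_contact_cyl (a b c : fun3) : Prop :=
  forall t x y, in_cyl t x y -> contact_density a b c t x y > 0.

Definition is_reeb_cyl (a b c : fun3) (Rv : R -> R -> R -> vec3) : Prop :=
  forall t x y, in_cyl t x y ->
    form_eval a b c t x y (Rv t x y) = 1 /\
    forall v : vec3, dform_eval a b c t x y (Rv t x y) v = 0.

(* Main.v *)
Require Import Defs.
From Stdlib Require Import Reals Lra Lia FunctionalExtensionality List Factorial.
From Coquelicot Require Import Coquelicot.
Open Scope R_scope.

Definition smooth1 (f : R -> R) : Prop :=
  forall n, (forall t, ex_derive (Derive_n f n) t) /\ (forall t, continuous (Derive_n f n) t).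

Lemma fam1_smooth (F : (R -> R) -> Prop) :
  (forall f, F f -> (forall t, ex_derive f t) /\ F (Derive f)) ->
  forall f, F f -> smooth1 f.
Proof.
  intros HF f Hf.
  assert (H : forall n, F (Derive_n f n)).
  { induction n as [|n IH]; simpl.
    - replace (Derive_n f 0) with f by (apply functional_extensionality; reflexivity). exact Hf.
    - replace (Derive_n f (S n)) with (Derive (Derive_n f n))
        by (apply functional_extensionality; reflexivity).
      apply (proj2 (HF _ IH)). }
  intro n. destruct (HF _ (H n)) as [H1 _]. split; [exact H1|].
  intro t. apply (@ex_derive_continuous R_AbsRing R_NormedModule). apply H1.
Qed.

Inductive alg1 (B : (R -> R) -> Prop) : (R -> R) -> Prop :=
| a1_c : forall c, alg1 B (fun _ => c)
| a1_b : forall f, B f -> alg1 B f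
| a1_add : forall f g, alg1 B f -> alg1 B g -> alg1 B (fun t => f t + g t)
| a1_mul : forall f g, alg1 B f -> alg1 B g -> alg1 B (fun t => f t * g t).

Lemma alg1_closed (B : (R -> R) -> Prop) :
  (forall f, B f -> (forall t, ex_derive f t) /\ alg1 B (Derive f)) ->
  forall f, alg1 B f -> (forall t, ex_derive f t) /\ alg1 B (Derive f).
Proof.
  intros HB f Hf. induction Hf as [c|f Hf|f g _ [Hf1 Hf2] _ [Hg1 Hg2]|f g Hf0 [Hf1 Hf2] Hg0 [Hg1 Hg2]].
  - split. intro; apply ex_derive_const.
    replace (Derive (fun _ : R => c)) with (fun _ : R => 0)
      by (apply functional_extensionality; intro; rewrite Derive_const; reflexivity).
    apply a1_c.
  - apply HB, Hf.
  - split. intro t; apply (ex_derive_plus f g t (Hf1 t) (Hg1 t)).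
    replace (Derive (fun t => f t + g t)) with (fun t => Derive f t + Derive g t)
      by (apply functional_extensionality; intro; rewrite Derive_plus; auto).
    apply a1_add; auto.
  - split. intro t; apply (ex_derive_mult f g t (Hf1 t) (Hg1 t)).
    replace (Derive (fun t => f t * g t)) with
        (fun t => Derive f t * g t + f t * Derive g t)
      by (apply functional_extensionality; intro; rewrite Derive_mult; auto).
    apply a1_add; apply a1_mul; auto.
Qed.

Lemma smooth1_Derive f : smooth1 f -> smooth1 (Derive f).
Proof.
  intros H n. 
  replace (Derive_n (Derive f) n) with (Derive_n f (S n)).
  apply H.
  apply functional_extensionality; intro x.
  revert x; induction n as [|n IH]; intro x; simpl.
  - apply Derive_ext; reflexivity.
  - apply Derive_ext. intro; apply IH.
Qed.

Lemma smooth1_ex f : smooth1 f -> forall t, ex_derive f t.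
Proof. intros H. apply (proj1 (H 0%nat)). Qed.

Lemma smooth1_cont f : smooth1 f -> forall t, continuous f t.
Proof. intros H. apply (proj2 (H 0%nat)). Qed.

Definition B1s (B : (R -> R) -> Prop) f := smooth1 f \/ B f.

Lemma alg1_smooth (B : (R -> R) -> Prop) :
  (forall f, B f -> (forall t, ex_derive f t) /\ alg1 (B1s B) (Derive f)) ->
  forall f, alg1 (B1s B) f -> smooth1 f.
Proof.
  intros HB. apply fam1_smooth. apply alg1_closed.
  intros f [Hf|Hf].
  - split. apply smooth1_ex, Hf. apply a1_b. left. apply smooth1_Derive, Hf.
  - apply HB, Hf.
Qed.

Lemma smooth1_alg0 : forall f, alg1 (B1s (fun _ => False)) f -> smooth1 f.
Proof. apply alg1_smooth. intros f []. Qed.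

Lemma smooth1_const c : smooth1 (fun _ => c).
Proof. apply smooth1_alg0, a1_c. Qed.
Lemma smooth1_plus f g : smooth1 f -> smooth1 g -> smooth1 (fun t => f t + g t).
Proof. intros; apply smooth1_alg0, a1_add; apply a1_b; left; auto. Qed.
Lemma smooth1_mult f g : smooth1 f -> smooth1 g -> smooth1 (fun t => f t * g t).
Proof. intros; apply smooth1_alg0, a1_mul; apply a1_b; left; auto. Qed.

Lemma exd_plus (f g : R -> R) x : ex_derive f x -> ex_derive g x -> ex_derive (fun t => f t + g t) x.
Proof. intros H1 H2. exact (@ex_derive_plus R_AbsRing R_NormedModule f g x H1 H2). Qed.
Lemma ex_pd2_const i c x y : ex_pd2 i (fun _ _ => c) x y.
Proof. destruct i; simpl; apply ex_derive_const. Qed.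
Lemma ex_pd2_plus i f g x y : ex_pd2 i f x y -> ex_pd2 i g x y ->
  ex_pd2 i (fun x y => f x y + g x y) x y.
Proof. destruct i; simpl; intros; [apply (exd_plus (fun s => f s y) (fun s => g s y))| apply (exd_plus (fun s => f x s) (fun s => g x s))]; auto. Qed.
Lemma ex_pd2_mult i f g x y : ex_pd2 i f x y -> ex_pd2 i g x y ->
  ex_pd2 i (fun x y => f x y * g x y) x y.
Proof. destruct i; simpl; intros; [apply (ex_derive_mult (fun s => f s y) (fun s => g s y))| apply (ex_derive_mult (fun s => f x s) (fun s => g x s))]; auto. Qed.
Lemma pd2_const i c : pd2 i (fun _ _ => c) = fun _ _ => 0.
Proof. apply functional_extensionality; intro x; apply functional_extensionality; intro y.
  destruct i; simpl; apply Derive_const. Qed.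
Lemma pd2_plus i f g : (forall x y, ex_pd2 i f x y) -> (forall x y, ex_pd2 i g x y) ->
  pd2 i (fun x y => f x y + g x y) = fun x y => pd2 i f x y + pd2 i g x y.
Proof. intros Hf Hg. apply functional_extensionality; intro x; apply functional_extensionality; intro y.
  specialize (Hf x y); specialize (Hg x y).
  destruct i; simpl in *; [apply (Derive_plus (fun s => f s y) (fun s => g s y))| apply (Derive_plus (fun s => f x s) (fun s => g x s))]; auto. Qed.
Lemma pd2_mult i f g : (forall x y, ex_pd2 i f x y) -> (forall x y, ex_pd2 i g x y) ->
  pd2 i (fun x y => f x y * g x y) = fun x y => pd2 i f x y * g x y + f x y * pd2 i g x y.
Proof. intros Hf Hg. apply functional_extensionality; intro x; apply functional_extensionality; intro y.
  specialize (Hf x y); specialize (Hg x y).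
  destruct i; simpl in *; [apply (Derive_mult (fun s => f s y) (fun s => g s y))| apply (Derive_mult (fun s => f x s) (fun s => g x s))]; auto. Qed.

Lemma cont2_conv f : (forall x y, continuity_2d_pt f x y) ->
  forall p : R * R, continuous (fun q : R * R => f (fst q) (snd q)) p.
Proof. intros H [x y]. apply (proj1 (continuity_2d_pt_filterlim f x y)), H. Qed.

Lemma conv_cont2 f : (forall p : R * R, continuous (fun q : R * R => f (fst q) (snd q)) p) ->
  forall x y, continuity_2d_pt f x y.
Proof. intros H x y. apply (proj2 (continuity_2d_pt_filterlim f x y)), (H (x,y)). Qed.

Lemma fam2_smooth (F : fun2 -> Prop) :
  (forall f, F f -> (forall i x y, ex_pd2 i f x y) /\ (forall x y, continuity_2d_pt f x y)
     /\ forall i, F (pd2 i f)) ->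
  forall f, F f -> smooth2 f.
Proof.
  intros HF f Hf.
  assert (H : forall l, F (iter_pd2 l f)).
  { induction l as [|i l IH]; simpl. exact Hf. apply (HF _ IH). }
  intro l. destruct (HF _ (H l)) as [H1 [H2 _]]. split; [exact H1|].
  apply cont2_conv, H2.
Qed.

Lemma iter_pd2_app l i f : iter_pd2 (l ++ i :: nil) f = iter_pd2 l (pd2 i f).
Proof. induction l as [|j l IH]; simpl. reflexivity. rewrite IH. reflexivity. Qed.

Lemma smooth2_pd i f : smooth2 f -> smooth2 (pd2 i f).
Proof. intros H l. rewrite <- iter_pd2_app. apply H. Qed.

Lemma smooth2_ex i f x y : smooth2 f -> ex_pd2 i f x y.
Proof. intros H. apply (proj1 (H nil)). Qed.
Lemma smooth2_cont f x y : smooth2 f -> continuity_2d_pt f x y.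
Proof. intros H. apply conv_cont2. apply (proj2 (H nil)). Qed.

Inductive alg2 (B : fun2 -> Prop) : fun2 -> Prop :=
| a2_c : forall c, alg2 B (fun _ _ => c)
| a2_b : forall f, B f -> alg2 B f
| a2_add : forall f g, alg2 B f -> alg2 B g -> alg2 B (fun x y => f x y + g x y)
| a2_mul : forall f g, alg2 B f -> alg2 B g -> alg2 B (fun x y => f x y * g x y).

Lemma alg2_closed (B : fun2 -> Prop) :
  (forall f, B f -> (forall i x y, ex_pd2 i f x y) /\ (forall x y, continuity_2d_pt f x y)
     /\ forall i, alg2 B (pd2 i f)) ->
  forall f, alg2 B f -> (forall i x y, ex_pd2 i f x y) /\ (forall x y, continuity_2d_pt f x y)
     /\ forall i, alg2 B (pd2 i f).
Proof.
  intros HB f Hf. induction Hf as [c|f Hf|f g Hf0 [Hf1 [Hf2 Hf3]] Hg0 [Hg1 [Hg2 Hg3]]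
     |f g Hf0 [Hf1 [Hf2 Hf3]] Hg0 [Hg1 [Hg2 Hg3]]].
  - split; [|split]. intros; apply ex_pd2_const. intros; apply continuity_2d_pt_const.
    intro i; rewrite pd2_const; apply a2_c.
  - apply HB, Hf.
  - split; [|split]. intros; apply ex_pd2_plus; auto. intros; apply continuity_2d_pt_plus; auto.
    intro i; rewrite pd2_plus; auto. apply a2_add; auto.
  - split; [|split]. intros; apply ex_pd2_mult; auto. intros; apply continuity_2d_pt_mult; auto.
    intro i; rewrite pd2_mult; auto. apply a2_add; apply a2_mul; auto.
Qed.

Definition B2 (f : fun2) : Prop :=
  smooth2 f \/ (exists r, smooth1 r /\ f = fun x y => r (x ^ 2 + y ^ 2))
  \/ f = (fun x y => x) \/ f = (fun x y => y).

Lemma cont2_u x y : continuity_2d_pt (fun x y => x ^ 2 + y ^ 2) x y.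
Proof.
  apply continuity_2d_pt_plus; simpl; apply continuity_2d_pt_mult;
   try apply continuity_2d_pt_mult; first [apply continuity_2d_pt_id1|apply continuity_2d_pt_id2|apply continuity_2d_pt_const].
Qed.

Lemma B2_ok f : B2 f -> (forall i x y, ex_pd2 i f x y) /\ (forall x y, continuity_2d_pt f x y)
     /\ forall i, alg2 B2 (pd2 i f).
Proof.
  intros [Hf|[[r [Hr ->]]|[->| ->]]].
  - split; [|split]. intros; apply smooth2_ex; auto. intros; apply smooth2_cont; auto.
    intro i; apply a2_b; left; apply smooth2_pd; auto.
  - split; [|split].
    + intros [|i] x y; simpl.
      * apply (ex_derive_comp r (fun s => s ^ 2 + y ^ 2)). apply smooth1_ex, Hr. auto_derive; auto.
      * apply (ex_derive_comp r (fun s => x ^ 2 + s ^ 2)). apply smooth1_ex, Hr. auto_derive; auto.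
    + intros x y. apply (continuity_1d_2d_pt_comp r (fun x y => x ^ 2 + y ^ 2)).
      apply continuity_pt_filterlim. apply smooth1_cont, Hr. apply cont2_u.
    + intros [|i].
      * replace (pd2 0 (fun x y => r (x ^ 2 + y ^ 2))) with
          (fun x y => (fun x y => Derive r (x ^ 2 + y ^ 2)) x y * ((fun _ _ => 2) x y * (fun x y => x) x y)).
        apply a2_mul. apply a2_b; right; left. exists (Derive r); split; auto. apply smooth1_Derive; auto.
        apply a2_mul; [apply a2_c|apply a2_b; right; right; left; auto].
        apply functional_extensionality; intro x; apply functional_extensionality; intro y; simpl.
        rewrite (Derive_comp r (fun s => s ^ 2 + y ^ 2)). 2: apply smooth1_ex, Hr. 2: auto_derive; auto.
        replace (Derive (fun s => s ^ 2 + y ^ 2) x) with (2 * x) by (symmetry; apply is_derive_unique; auto_derive; auto; ring).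
        replace (x * (x * 1) + y * (y * 1)) with (x ^ 2 + y ^ 2) by ring; ring.
      * replace (pd2 (S i) (fun x y => r (x ^ 2 + y ^ 2))) with
          (fun x y => (fun x y => Derive r (x ^ 2 + y ^ 2)) x y * ((fun _ _ => 2) x y * (fun x y => y) x y)).
        apply a2_mul. apply a2_b; right; left. exists (Derive r); split; auto. apply smooth1_Derive; auto.
        apply a2_mul; [apply a2_c|apply a2_b; right; right; right; auto].
        apply functional_extensionality; intro x; apply functional_extensionality; intro y; simpl.
        rewrite (Derive_comp r (fun s => x ^ 2 + s ^ 2)). 2: apply smooth1_ex, Hr. 2: auto_derive; auto.
        replace (Derive (fun s => x ^ 2 + s ^ 2) y) with (2 * y) by (symmetry; apply is_derive_unique; auto_derive; auto; ring).
        replace (x * (x * 1) + y * (y * 1)) with (x ^ 2 + y ^ 2) by ring; ring.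
  - split; [|split].
    + intros [|i] x y; simpl. apply ex_derive_id. apply ex_derive_const.
    + intros; apply continuity_2d_pt_id1.
    + intros [|i].
      * replace (pd2 0 (fun x y => x)) with (fun _ _ : R => 1). apply a2_c.
        apply functional_extensionality; intro x; apply functional_extensionality; intro y; simpl.
        symmetry; apply Derive_id.
      * replace (pd2 (S i) (fun x y => x)) with (fun _ _ : R => 0). apply a2_c.
        apply functional_extensionality; intro x; apply functional_extensionality; intro y; simpl.
        symmetry; apply Derive_const.
  - split; [|split].
    + intros [|i] x y; simpl. apply ex_derive_const. apply ex_derive_id.
    + intros; apply continuity_2d_pt_id2.
    + intros [|i].
      * replace (pd2 0 (fun x y => y)) with (fun _ _ : R => 0). apply a2_c.
        apply functional_extensionality; intro x; apply functional_extensionality; intro y; simpl.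
        symmetry; apply Derive_const.
      * replace (pd2 (S i) (fun x y => y)) with (fun _ _ : R => 1). apply a2_c.
        apply functional_extensionality; intro x; apply functional_extensionality; intro y; simpl.
        symmetry; apply Derive_id.
Qed.

Lemma alg2_smooth f : alg2 B2 f -> smooth2 f.
Proof.
  apply fam2_smooth. apply alg2_closed. apply B2_ok.
Qed.

Lemma smooth2_const c : smooth2 (fun _ _ => c).
Proof. apply alg2_smooth, a2_c. Qed.
Lemma smooth2_plus f g : smooth2 f -> smooth2 g -> smooth2 (fun x y => f x y + g x y).
Proof. intros; apply alg2_smooth, a2_add; apply a2_b; left; auto. Qed.
Lemma smooth2_mult f g : smooth2 f -> smooth2 g -> smooth2 (fun x y => f x y * g x y).
Proof. intros; apply alg2_smooth, a2_mul; apply a2_b; left; auto. Qed.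
Lemma smooth2_radial r : smooth1 r -> smooth2 (fun x y => r (x ^ 2 + y ^ 2)).
Proof. intros; apply alg2_smooth, a2_b; right; left; eauto. Qed.
Lemma smooth2_scal c f : smooth2 f -> smooth2 (fun x y => c * f x y).
Proof. intros; apply smooth2_mult; auto; apply smooth2_const. Qed.
Lemma smooth2_minus f g : smooth2 f -> smooth2 g -> smooth2 (fun x y => f x y - g x y).
Proof. intros Hf Hg. replace (fun x y => f x y - g x y) with (fun x y => f x y + (-1) * g x y).
  apply smooth2_plus; auto; apply smooth2_scal; auto.
  apply functional_extensionality; intro x; apply functional_extensionality; intro y; ring. Qed.

Definition C3 (f : fun3) := forall p : R * (R * R),
  continuous (fun q : R * (R * R) => f (fst q) (fst (snd q)) (snd (snd q))) p.

Ltac fe3 := apply functional_extensionality; intro t; apply functional_extensionality; intro x;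
  apply functional_extensionality; intro y.

Lemma ex_pd3_const i c t x y : ex_pd3 i (fun _ _ _ => c) t x y.
Proof. destruct i as [|[|i]]; simpl; apply ex_derive_const. Qed.
Lemma ex_pd3_plus i f g t x y : ex_pd3 i f t x y -> ex_pd3 i g t x y ->
  ex_pd3 i (fun t x y => f t x y + g t x y) t x y.
Proof. destruct i as [|[|i]]; simpl; intros;
  [apply (exd_plus (fun s => f s x y) (fun s => g s x y))
  |apply (exd_plus (fun s => f t s y) (fun s => g t s y))
  |apply (exd_plus (fun s => f t x s) (fun s => g t x s))]; auto. Qed.
Lemma ex_pd3_mult i f g t x y : ex_pd3 i f t x y -> ex_pd3 i g t x y ->
  ex_pd3 i (fun t x y => f t x y * g t x y) t x y.
Proof. destruct i as [|[|i]]; simpl; intros;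
  [apply (ex_derive_mult (fun s => f s x y) (fun s => g s x y))
  |apply (ex_derive_mult (fun s => f t s y) (fun s => g t s y))
  |apply (ex_derive_mult (fun s => f t x s) (fun s => g t x s))]; auto. Qed.
Lemma pd3_const i c : pd3 i (fun _ _ _ => c) = fun _ _ _ => 0.
Proof. fe3. destruct i as [|[|i]]; simpl; apply Derive_const. Qed.
Lemma pd3_plus i f g : (forall t x y, ex_pd3 i f t x y) -> (forall t x y, ex_pd3 i g t x y) ->
  pd3 i (fun t x y => f t x y + g t x y) = fun t x y => pd3 i f t x y + pd3 i g t x y.
Proof. intros Hf Hg. fe3. specialize (Hf t x y); specialize (Hg t x y).
  destruct i as [|[|i]]; simpl in *;
  [apply (Derive_plus (fun s => f s x y) (fun s => g s x y))
  |apply (Derive_plus (fun s => f t s y) (fun s => g t s y))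
  |apply (Derive_plus (fun s => f t x s) (fun s => g t x s))]; auto. Qed.
Lemma pd3_mult i f g : (forall t x y, ex_pd3 i f t x y) -> (forall t x y, ex_pd3 i g t x y) ->
  pd3 i (fun t x y => f t x y * g t x y) = fun t x y => pd3 i f t x y * g t x y + f t x y * pd3 i g t x y.
Proof. intros Hf Hg. fe3. specialize (Hf t x y); specialize (Hg t x y).
  destruct i as [|[|i]]; simpl in *;
  [apply (Derive_mult (fun s => f s x y) (fun s => g s x y))
  |apply (Derive_mult (fun s => f t s y) (fun s => g t s y))
  |apply (Derive_mult (fun s => f t x s) (fun s => g t x s))]; auto. Qed.

Lemma C3_const c : C3 (fun _ _ _ => c).
Proof. intro p. apply continuous_const. Qed.
Lemma C3_plus f g : C3 f -> C3 g -> C3 (fun t x y => f t x y + g t x y).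
Proof. intros Hf Hg p. apply (@continuous_plus _ R_AbsRing R_NormedModule
   (fun q : R * (R * R) => f (fst q) (fst (snd q)) (snd (snd q)))
   (fun q : R * (R * R) => g (fst q) (fst (snd q)) (snd (snd q)))); auto. Qed.
Lemma C3_mult f g : C3 f -> C3 g -> C3 (fun t x y => f t x y * g t x y).
Proof. intros Hf Hg p. apply (@continuous_mult _ R_AbsRing
   (fun q : R * (R * R) => f (fst q) (fst (snd q)) (snd (snd q)))
   (fun q : R * (R * R) => g (fst q) (fst (snd q)) (snd (snd q)))); auto. Qed.

Lemma fam3_smooth (F : fun3 -> Prop) :
  (forall f, F f -> (forall i t x y, ex_pd3 i f t x y) /\ C3 f /\ forall i, F (pd3 i f)) ->
  forall f, F f -> smooth3 f.
Proof.
  intros HF f Hf.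
  assert (H : forall l, F (iter_pd3 l f)).
  { induction l as [|i l IH]; simpl. exact Hf. apply (HF _ IH). }
  intro l. destruct (HF _ (H l)) as [H1 [H2 _]]. split; [exact H1|exact H2].
Qed.

Inductive alg3 (B : fun3 -> Prop) : fun3 -> Prop :=
| a3_c : forall c, alg3 B (fun _ _ _ => c)
| a3_b : forall f, B f -> alg3 B f
| a3_add : forall f g, alg3 B f -> alg3 B g -> alg3 B (fun t x y => f t x y + g t x y)
| a3_mul : forall f g, alg3 B f -> alg3 B g -> alg3 B (fun t x y => f t x y * g t x y).

Lemma alg3_closed (B : fun3 -> Prop) :
  (forall f, B f -> (forall i t x y, ex_pd3 i f t x y) /\ C3 f /\ forall i, alg3 B (pd3 i f)) ->
  forall f, alg3 B f -> (forall i t x y, ex_pd3 i f t x y) /\ C3 f /\ forall i, alg3 B (pd3 i f).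
Proof.
  intros HB f Hf. induction Hf as [c|f Hf|f g Hf0 [Hf1 [Hf2 Hf3]] Hg0 [Hg1 [Hg2 Hg3]]
     |f g Hf0 [Hf1 [Hf2 Hf3]] Hg0 [Hg1 [Hg2 Hg3]]].
  - split; [|split]. intros; apply ex_pd3_const. apply C3_const.
    intro i; rewrite pd3_const; apply a3_c.
  - apply HB, Hf.
  - split; [|split]. intros; apply ex_pd3_plus; auto. apply C3_plus; auto.
    intro i; rewrite pd3_plus; auto. apply a3_add; auto.
  - split; [|split]. intros; apply ex_pd3_mult; auto. apply C3_mult; auto.
    intro i; rewrite pd3_mult; auto. apply a3_add; apply a3_mul; auto.
Qed.

Definition B3 (f : fun3) : Prop :=
  (exists g, smooth1 g /\ f = fun t x y => g t) \/ (exists g, smooth2 g /\ f = fun t x y => g x y).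

Lemma B3_ok f : B3 f -> (forall i t x y, ex_pd3 i f t x y) /\ C3 f /\ forall i, alg3 B3 (pd3 i f).
Proof.
  intros [[g [Hg ->]]|[g [Hg ->]]].
  - split; [|split].
    + intros [|[|i]] t x y; simpl. apply smooth1_ex, Hg. apply ex_derive_const. apply ex_derive_const.
    + intros p. apply (continuous_comp (fun q : R * (R * R) => fst q) g).
      destruct p as [t [x y]]. apply continuous_fst. apply smooth1_cont, Hg.
    + intros [|[|i]].
      * replace (pd3 0 (fun t x y => g t)) with (fun t (x y : R) => Derive g t).
        apply a3_b; left; exists (Derive g); split; auto. apply smooth1_Derive; auto.
        fe3; reflexivity.
      * replace (pd3 1 (fun t x y => g t)) with (fun (t x y : R) => 0).
        apply a3_c. fe3; simpl; rewrite Derive_const; auto.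
      * replace (pd3 (S (S i)) (fun t x y => g t)) with (fun (t x y : R) => 0).
        apply a3_c. fe3; simpl; rewrite Derive_const; auto.
  - split; [|split].
    + intros [|[|i]] t x y; simpl. apply ex_derive_const. apply (smooth2_ex 0), Hg. apply (smooth2_ex 1), Hg.
    + intros p. apply (continuous_comp (fun q : R * (R * R) => snd q) (fun q => g (fst q) (snd q))).
      destruct p as [t [x y]]. apply continuous_snd. apply (proj2 (Hg nil)).
    + intros [|[|i]].
      * replace (pd3 0 (fun t x y => g x y)) with (fun (t x y : R) => 0). apply a3_c.
        fe3; simpl; rewrite Derive_const; auto.
      * replace (pd3 1 (fun t x y => g x y)) with (fun (t x y : R) => pd2 0 g x y).
        apply a3_b; right; exists (pd2 0 g); split; auto. apply smooth2_pd; auto.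
        fe3; reflexivity.
      * replace (pd3 (S (S i)) (fun t x y => g x y)) with (fun (t x y : R) => pd2 1 g x y).
        apply a3_b; right; exists (pd2 1 g); split; auto. apply smooth2_pd; auto.
        fe3; reflexivity.
Qed.

Lemma alg3_smooth f : alg3 B3 f -> smooth3 f.
Proof. apply fam3_smooth. apply alg3_closed. apply B3_ok. Qed.

Lemma smooth3_sep (f1 f2 : R -> R) (g1 g2 : fun2) :
  smooth1 f1 -> smooth1 f2 -> smooth2 g1 -> smooth2 g2 ->
  smooth3 (fun t x y => f1 t * g1 x y + f2 t * g2 x y).
Proof.
  intros. apply alg3_smooth. apply a3_add; apply a3_mul; apply a3_b.
  left; exists f1; auto. right; exists g1; auto. left; exists f2; auto. right; exists g2; auto.
Qed.

Definition gk (k : nat) (t : R) : R :=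
  if Rle_dec t 0 then 0 else exp (- / t) * (/ t) ^ k.

Lemma sum_ge_last (f : nat -> R) n : (forall k, 0 <= f k) -> f n <= sum_f_R0 f n.
Proof.
  intros H. destruct n. simpl; lra.
  simpl. pose proof (cond_pos_sum f n H). lra.
Qed.

Lemma exp_ge_pow u n : 0 <= u -> u ^ n / INR (fact n) <= exp u.
Proof.
  intros Hu. eapply Rle_trans; [|apply exp_ge_taylor; auto].
  apply (sum_ge_last (fun k => u ^ k / INR (fact k))).
  intro k. apply Rmult_le_pos. apply pow_le; auto. left; apply Rinv_0_lt_compat, INR_fact_lt_0.
Qed.

Lemma gk_nonneg k t : 0 <= gk k t.
Proof. unfold gk. destruct (Rle_dec t 0). lra.
  apply Rmult_le_pos. left; apply exp_pos. apply pow_le. left; apply Rinv_0_lt_compat; lra. Qed.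

Lemma gk_bound k t : 0 < t -> gk k t <= INR (fact (S k)) * t.
Proof.
  intros Ht. unfold gk. destruct (Rle_dec t 0). lra.
  set (u := / t). assert (Hu : 0 < u) by (apply Rinv_0_lt_compat; lra).
  assert (Ht' : t = / u) by (unfold u; rewrite Rinv_inv; auto).
  rewrite exp_Ropp. fold u. rewrite Ht'.
  pose proof (exp_ge_pow u (S k) (Rlt_le _ _ Hu)) as He.
  pose proof (INR_fact_lt_0 (S k)) as Hf.
  assert (Hp : 0 < u ^ k) by (apply pow_lt; auto).
  pose proof (exp_pos u) as Hexp.
  apply (Rmult_le_reg_l (exp u * u)). apply Rmult_lt_0_compat; auto.
  replace (exp u * u * (/ exp u * u ^ k)) with (u * u ^ k) by (field; lra).
  replace (exp u * u * (INR (fact (S k)) * / u)) with (exp u * INR (fact (S k))) by (field; lra).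
  apply (Rmult_le_compat_r (INR (fact (S k)))) in He; [|lra].
  unfold Rdiv in He. rewrite Rmult_assoc, Rinv_l, Rmult_1_r in He; [|lra].
  simpl pow in He. lra.
Qed.

Lemma gk_le0 k t : t <= 0 -> gk k t = 0.
Proof. intros H; unfold gk; destruct (Rle_dec t 0); lra. Qed.
Lemma gk_pos k t : 0 < t -> gk k t = exp (- / t) * (/ t) ^ k.
Proof. intros H; unfold gk; destruct (Rle_dec t 0); lra. Qed.

Lemma gk_derive k t : is_derive (gk k) t (gk (S (S k)) t - INR k * gk (S k) t).
Proof.
  destruct (Rlt_or_le 0 t) as [Ht|Ht]; [|destruct (Rle_lt_or_eq _ _ Ht) as [Ht2|Ht2]].
  - apply (is_derive_ext_loc (fun s => exp (- / s) * (/ s) ^ k)).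
    { apply (locally_interval _ t 0 p_infty); simpl; auto. intros y Hy _. rewrite gk_pos; auto. }
    rewrite !gk_pos; auto.
    auto_derive. lra.
    destruct k as [|m].
    + simpl. field. lra.
    + rewrite <- pred_Sn. simpl pow. field. lra.
  - apply (is_derive_ext_loc (fun s => 0)).
    { apply (locally_interval _ t m_infty 0); simpl; auto. intros y _ Hy. rewrite gk_le0; auto; lra. }
    rewrite !gk_le0; try lra. replace (0 - INR k * 0) with 0 by ring.
    apply (@is_derive_const R_AbsRing R_NormedModule).
  - subst t. rewrite !gk_le0; try lra. replace (0 - INR k * 0) with 0 by ring.
    apply is_derive_Reals. intros eps Heps.
    assert (Hf : 0 < INR (fact (S (S k)))) by apply INR_fact_lt_0.
    exists (mkposreal (eps / INR (fact (S (S k)))) (Rdiv_lt_0_compat _ _ Heps Hf)).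
    intros h Hh Hha. change (Rabs h < eps / INR (fact (S (S k)))) in Hha. rewrite Rplus_0_l, (gk_le0 k 0); [|lra].
    destruct (Rle_lt_dec h 0) as [Hh0|Hh0].
    + rewrite gk_le0; auto. replace ((0 - 0) / h - 0) with 0 by (field; auto).
      rewrite Rabs_R0; lra.
    + replace ((gk k h - 0) / h - 0) with (gk (S k) h).
      2: { rewrite !gk_pos; auto. simpl. field. lra. }
      rewrite Rabs_pos_eq by apply gk_nonneg.
      eapply Rle_lt_trans. apply gk_bound; auto.
      rewrite Rabs_pos_eq in Hha by lra.
      apply (Rmult_lt_compat_l (INR (fact (S (S k))))) in Hha; auto.
      replace (INR (fact (S (S k))) * (eps / INR (fact (S (S k))))) with eps in Hha by (field; lra).
      lra.
Qed.

Lemma isd_comp (f g : R -> R) x df dg : is_derive f (g x) df -> is_derive g x dg ->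
  is_derive (fun x => f (g x)) x (dg * df).
Proof. intros H1 H2. exact (is_derive_comp f g x df dg H1 H2). Qed.

Lemma isd_eq (f : R -> R) (x l l' : R) : is_derive f x l -> l = l' -> is_derive f x l'.
Proof. intros H ->; exact H. Qed.

Lemma is_derive_shift k a (t : R) :
  is_derive (fun t => gk k (t - a)) t (gk (S (S k)) (t - a) - INR k * gk (S k) (t - a)).
Proof.
  apply (isd_eq _ _ (1 * (gk (S (S k)) (t - a) - INR k * gk (S k) (t - a)))).
  apply (isd_comp (gk k) (fun t => t - a) t _ 1).
  apply gk_derive. auto_derive; auto; try ring. all: try ring.
Qed.

Lemma is_derive_rshift k b (t : R) :
  is_derive (fun t => gk k (b - t)) t (- (gk (S (S k)) (b - t) - INR k * gk (S k) (b - t))).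
Proof.
  apply (isd_eq _ _ (-1 * (gk (S (S k)) (b - t) - INR k * gk (S k) (b - t)))).
  apply (isd_comp (gk k) (fun t => b - t) t _ (-1)).
  apply gk_derive. auto_derive; auto; try ring. all: try ring.
Qed.

Definition den a b t := gk 0 (t - a) + gk 0 (b - t).
Definition st a b t := gk 0 (t - a) * / den a b t.

Lemma gk_pos0 k s : 0 < s -> 0 < gk k s.
Proof. intros H; rewrite gk_pos; auto. apply Rmult_lt_0_compat. apply exp_pos.
  apply pow_lt, Rinv_0_lt_compat; auto. Qed.

Lemma den_pos a b t : a < b -> 0 < den a b t.
Proof. intros H; unfold den. pose proof (gk_nonneg 0 (t - a)); pose proof (gk_nonneg 0 (b - t)).
  destruct (Rlt_or_le a t). pose proof (gk_pos0 0 (t - a)); lra.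
  pose proof (gk_pos0 0 (b - t)); lra. Qed.

Definition Bst a b (f : R -> R) : Prop :=
  (exists k, f = fun t => gk k (t - a)) \/ (exists k, f = fun t => gk k (b - t))
  \/ (exists k, f = fun t => (/ den a b t) ^ k).

Definition Dden a b t := gk 2 (t - a) + - gk 2 (b - t).

Lemma is_derive_den a b (t : R) : is_derive (den a b) t (Dden a b t).
Proof.
  unfold den, Dden. apply (isd_eq _ _ (plus (gk 2 (t - a) - INR 0 * gk 1 (t - a)) (- (gk 2 (b - t) - INR 0 * gk 1 (b - t))))).
  apply (@is_derive_plus R_AbsRing R_NormedModule (fun t => gk 0 (t - a)) (fun t => gk 0 (b - t))).
  apply is_derive_shift. apply is_derive_rshift. simpl. unfold plus; simpl. ring.
Qed.

Lemma Bst_ok a b : a < b -> forall f, Bst a b f -> (forall t, ex_derive f t) /\ alg1 (B1s (Bst a b)) (Derive f).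
Proof.
  intros Hab f [[k ->]|[[k ->]|[k ->]]].
  - split. intro t; eexists; apply is_derive_shift.
    replace (Derive (fun t => gk k (t - a))) with
      (fun t => (fun t => gk (S (S k)) (t - a)) t + (fun _ => - INR k) t * (fun t => gk (S k) (t - a)) t).
    apply a1_add. apply a1_b; right; left; eauto. apply a1_mul. apply a1_c. apply a1_b; right; left; eauto.
    apply functional_extensionality; intro t. symmetry; apply is_derive_unique. eapply isd_eq. apply is_derive_shift. ring.
  - split. intro t; eexists; apply is_derive_rshift.
    replace (Derive (fun t => gk k (b - t))) with
      (fun t => (fun _ => -1) t * (fun t => gk (S (S k)) (b - t)) t + (fun _ => INR k) t * (fun t => gk (S k) (b - t)) t).
    apply a1_add; apply a1_mul; try apply a1_c; apply a1_b; right; right; left; eauto.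
    apply functional_extensionality; intro t. symmetry; apply is_derive_unique. eapply isd_eq. apply is_derive_rshift. ring.
  - assert (HD : forall t, is_derive (fun t => (/ den a b t) ^ k) t
        (INR k * (- Dden a b t * (/ den a b t) ^ 2) * (/ den a b t) ^ Init.Nat.pred k)).
    { intro t. apply (isd_eq _ _ (INR k * (- Dden a b t / den a b t ^ 2) * (/ den a b t) ^ Init.Nat.pred k)).
      apply (is_derive_pow (fun t => / den a b t)). apply (is_derive_inv (den a b)). apply is_derive_den.
      pose proof (den_pos a b t Hab); lra. pose proof (den_pos a b t Hab). field. lra. }
    split. intro t; eexists; apply HD.
    replace (Derive (fun t => (/ den a b t) ^ k)) with
      (fun t => (fun _ => INR k) t * (((fun _ => -1) t * ((fun t => gk 2 (t - a)) t + (fun _ => -1) t * (fun t => gk 2 (b - t)) t))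
         * ((fun t => (/ den a b t) ^ 2) t * (fun t => (/ den a b t) ^ Init.Nat.pred k) t))).
    apply a1_mul; [apply a1_c|]. apply a1_mul. apply a1_mul; [apply a1_c|].
    apply a1_add. apply a1_b; right; left; eauto. apply a1_mul; [apply a1_c|]. apply a1_b; right; right; left; eauto.
    apply a1_mul; apply a1_b; right; right; right; eauto.
    apply functional_extensionality; intro t. symmetry; apply is_derive_unique. eapply isd_eq. apply HD. unfold Dden. ring.
Qed.

Lemma st_alg a b : alg1 (B1s (Bst a b)) (st a b).
Proof.
  replace (st a b) with (fun t => (fun t => gk 0 (t - a)) t * (fun t => (/ den a b t) ^ 1) t).
  apply a1_mul; apply a1_b; right. left; eauto. right; right; eauto.
  apply functional_extensionality; intro t. unfold st. simpl. ring.
Qed.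

Lemma smooth1_st a b : a < b -> smooth1 (st a b).
Proof. intros H. apply (alg1_smooth (Bst a b)). apply Bst_ok; auto. apply st_alg. Qed.

Lemma st_left a b t : a < b -> t <= a -> st a b t = 0.
Proof. intros H1 H2. unfold st. rewrite gk_le0 by lra. ring. Qed.

Lemma st_right a b t : a < b -> b <= t -> st a b t = 1.
Proof. intros H1 H2. unfold st, den. rewrite (gk_le0 0 (b - t)) by lra.
  pose proof (gk_pos0 0 (t - a)). field. lra. Qed.

Lemma st_bounds a b t : a < b -> 0 <= st a b t <= 1.
Proof. intros H. unfold st, den. pose proof (gk_nonneg 0 (t - a)); pose proof (gk_nonneg 0 (b - t)).
  pose proof (den_pos a b t H). unfold den in *. split.
  apply Rmult_le_pos; auto. left; apply Rinv_0_lt_compat; auto.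
  apply (Rmult_le_reg_r (gk 0 (t - a) + gk 0 (b - t))); auto.
  rewrite Rmult_assoc, Rinv_l by lra. lra. Qed.

Lemma Dst_left a b t : a < b -> t < a -> Derive (st a b) t = 0.
Proof. intros H1 H2. rewrite (Derive_ext_loc _ (fun _ => 0)). apply Derive_const.
  apply (locally_interval _ t m_infty a); simpl; auto. intros y _ Hy. apply st_left; lra. Qed.

Lemma Dst_right a b t : a < b -> b < t -> Derive (st a b) t = 0.
Proof. intros H1 H2. rewrite (Derive_ext_loc _ (fun _ => 1)). apply Derive_const.
  apply (locally_interval _ t b p_infty); simpl; auto. intros y Hy _. apply st_right; lra. Qed.

Lemma exRc (f : R -> R) : (forall t, continuous f t) -> forall a b, ex_RInt f a b.
Proof. intros H a b. apply (@ex_RInt_continuous R_CompleteNormedModule). intros; apply H. Qed.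

Lemma RInt_swapR (f : R -> R) a b : ex_RInt f a b -> RInt f b a = - RInt f a b.
Proof. intros H. rewrite <- (opp_RInt_swap f a b H). reflexivity. Qed.

Lemma RInt_ChaslesR (f : R -> R) a b c : ex_RInt f a b -> ex_RInt f b c ->
  RInt f a b + RInt f b c = RInt f a c.
Proof. intros H1 H2. rewrite <- (RInt_Chasles f a b c H1 H2). reflexivity. Qed.

Lemma RInt_minusR (f g : R -> R) a b : ex_RInt f a b -> ex_RInt g a b ->
  RInt (fun x => f x - g x) a b = RInt f a b - RInt g a b.
Proof. intros H1 H2. exact (@RInt_minus R_CompleteNormedModule f g a b H1 H2). Qed.

Lemma RInt_bound (f : R -> R) a b M : ex_RInt f a b ->
  (forall t, Rmin a b <= t <= Rmax a b -> Rabs (f t) <= M) ->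
  Rabs (RInt f a b) <= Rabs (b - a) * M.
Proof.
  intros He H. destruct (Rle_dec a b) as [Hab|Hab].
  - rewrite (Rabs_pos_eq (b - a)) by lra. apply abs_RInt_le_const; auto.
    intros t Ht; apply H. rewrite Rmin_left, Rmax_right; lra.
  - rewrite (RInt_swapR f b a); [|apply ex_RInt_swap; auto].
    rewrite Rabs_Ropp. rewrite Rabs_minus_sym, (Rabs_pos_eq (a - b)) by lra.
    apply abs_RInt_le_const; [lra|apply ex_RInt_swap; auto|].
    intros t Ht; apply H. rewrite Rmin_right, Rmax_left; lra.
Qed.

Lemma cont2_swap f x y : continuity_2d_pt f x y -> continuity_2d_pt (fun u v => f v u) y x.
Proof.
  intros H eps. destruct (H eps) as [d Hd]. exists d. intros u v Hu Hv. apply Hd; auto.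
Qed.

Lemma cont2_1 f x y : continuity_2d_pt f x y -> continuous (fun s => f s y) x.
Proof.
  intros H. apply continuity_pt_filterlim. intros eps Heps.
  destruct (H (mkposreal eps Heps)) as [d Hd]. exists d. split. apply cond_pos.
  intros z [_ Hz]. unfold R_dist in *. apply Hd; simpl; auto. unfold Rminus; rewrite Rplus_opp_r, Rabs_R0. apply cond_pos.
Qed.

Lemma IG_cont (G : fun2) a : (forall x y, continuity_2d_pt G x y) ->
  forall x0 y0, continuity_2d_pt (fun x y => RInt (fun s => G s y) a x) x0 y0.
Proof.
  intros HG x0 y0 eps.
  assert (HexG : forall y p q, ex_RInt (fun s => G s y) p q).
  { intros y. apply exRc. intro t. apply cont2_1, HG. }
  set (m1 := Rmin a x0 - 1). set (m2 := Rmax a x0 + 1).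
  assert (Hm : m1 <= m2) by (unfold m1, m2; pose proof (Rmin_l a x0); pose proof (Rmax_l a x0); lra).
  destruct (continuous_ab_maj_consistent (fun s => Rabs (G s y0)) m1 m2 Hm) as [Mx [HMx _]].
  { intros c _. apply continuous_Rabs_comp. apply cont2_1, HG. }
  set (M := Rabs (G Mx y0)).
  assert (HM0 : 0 <= M) by apply Rabs_pos.
  set (L := Rabs (x0 - a) + 1).
  assert (HL : 0 < L) by (unfold L; pose proof (Rabs_pos (x0 - a)); lra).
  assert (He1 : 0 < eps / (2 * L)) by (apply Rdiv_lt_0_compat; [apply cond_pos|lra]).
  set (eps1 := mkposreal _ He1).
  destruct (uniform_continuity_2d G m1 m2 (y0 - 1) (y0 + 1)) with (eps := eps1) as [d1 Hd1].
  { intros; apply HG. }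
  assert (He2 : 0 < eps / (2 * (M + eps1 + 1))).
  { apply Rdiv_lt_0_compat. apply cond_pos. simpl. lra. }
  assert (Hd : 0 < Rmin 1 (Rmin d1 (eps / (2 * (M + eps1 + 1))))).
  { repeat apply Rmin_pos; try lra. apply cond_pos. }
  exists (mkposreal _ Hd). simpl. intros u v Hu Hv.
  assert (Hu1 : Rabs (u - x0) < 1) by (eapply Rlt_le_trans; [exact Hu|apply Rmin_l]).
  assert (Hv1 : Rabs (v - y0) < 1) by (eapply Rlt_le_trans; [exact Hv|apply Rmin_l]).
  assert (Hvd : Rabs (v - y0) < d1) by (eapply Rlt_le_trans; [exact Hv|]; eapply Rle_trans; [apply Rmin_r|apply Rmin_l]).
  assert (Hud : Rabs (u - x0) < eps / (2 * (M + eps1 + 1)))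
    by (eapply Rlt_le_trans; [exact Hu|]; eapply Rle_trans; [apply Rmin_r|apply Rmin_r]).
  apply Rabs_lt_between in Hv1. apply Rabs_lt_between in Hu1.
  assert (Hkey : forall s, m1 <= s <= m2 -> Rabs (G s v - G s y0) < eps1).
  { intros s Hs. apply (Hd1 s y0 s v); auto; try lra. unfold Rminus; rewrite Rplus_opp_r, Rabs_R0. apply cond_pos. }
  assert (Hbnd : forall s, m1 <= s <= m2 -> Rabs (G s v) <= M + eps1).
  { intros s Hs. specialize (Hkey s Hs). specialize (HMx s Hs). simpl in HMx. fold M in HMx.
    pose proof (Rabs_triang (G s v - G s y0) (G s y0)).
    replace (G s v - G s y0 + G s y0) with (G s v) in H by ring. lra. }
  rewrite <- (RInt_ChaslesR (fun s => G s v) a x0 u) by apply HexG.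
  replace (RInt (fun s => G s v) a x0 + RInt (fun s => G s v) x0 u - RInt (fun s => G s y0) a x0)
    with (RInt (fun s => G s v - G s y0) a x0 + RInt (fun s => G s v) x0 u)
    by (rewrite RInt_minusR by apply HexG; ring).
  eapply Rle_lt_trans. apply Rabs_triang.
  assert (H1 : Rabs (RInt (fun s => G s v - G s y0) a x0) <= Rabs (x0 - a) * eps1).
  { apply RInt_bound. apply (ex_RInt_minus (fun s => G s v) (fun s => G s y0)); apply HexG.
    intros t Ht. left. apply Hkey. unfold m1, m2. split.
    pose proof (Rmin_l a x0); pose proof (Rmin_r a x0); pose proof (Rmax_l a x0); pose proof (Rmax_r a x0); lra.
    pose proof (Rmin_l a x0); pose proof (Rmin_r a x0); pose proof (Rmax_l a x0); pose proof (Rmax_r a x0); lra. }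
  assert (H2 : Rabs (RInt (fun s => G s v) x0 u) <= Rabs (u - x0) * (M + eps1)).
  { apply RInt_bound. apply HexG.
    intros t Ht. apply Hbnd. unfold m1, m2.
    pose proof (Rmin_l x0 u); pose proof (Rmin_r x0 u); pose proof (Rmax_l x0 u); pose proof (Rmax_r x0 u).
    pose proof (Rmin_l a x0); pose proof (Rmin_r a x0); pose proof (Rmax_l a x0); pose proof (Rmax_r a x0).
    unfold Rmin, Rmax in *. destruct (Rle_dec x0 u), (Rle_dec a x0); lra. }
  assert (H3 : Rabs (x0 - a) * eps1 < eps / 2).
  { simpl. unfold L in *. apply (Rmult_lt_reg_r (2 * (Rabs (x0 - a) + 1))); [lra|].
    field_simplify; [|lra]. pose proof (cond_pos eps). nra. }
  assert (H4 : Rabs (u - x0) * (M + eps1) < eps / 2).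
  { pose proof (Rabs_pos (u - x0)). assert (0 < M + eps1) by (simpl; lra).
    apply Rle_lt_trans with (eps / (2 * (M + eps1 + 1)) * (M + eps1)).
    apply Rmult_le_compat_r; lra.
    apply (Rmult_lt_reg_r (2 * (M + eps1 + 1))); [lra|].
    field_simplify; [|lra]. pose proof (cond_pos eps). nra. }
  lra.
Qed.

Definition IG (G : fun2) : fun2 := fun x y => RInt (fun s => G s y) (-2) x.

Lemma smooth2_exR G y p q : smooth2 G -> ex_RInt (fun s => G s y) p q.
Proof. intros H. apply exRc. intro t. apply cont2_1, smooth2_cont, H. Qed.

Lemma IG_d0 G x y : smooth2 G -> is_derive (fun s => IG G s y) x (G x y).
Proof.
  intros HG. unfold IG.
  apply (is_derive_RInt (fun t => G t y) (fun s => RInt (fun t => G t y) (-2) s) (-2) x).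
  apply filter_forall. intro b0. apply (@RInt_correct R_CompleteNormedModule). apply smooth2_exR; auto.
  apply cont2_1, smooth2_cont, HG.
Qed.

Lemma IG_d1 G x y : smooth2 G -> is_derive (fun s => IG G x s) y (IG (pd2 1 G) x y).
Proof.
  intros HG. unfold IG.
  apply (is_derive_RInt_param (fun u t => G t u) (-2) x y).
  - apply filter_forall. intros y0 t _. apply (smooth2_ex 1), HG.
  - intros t _. apply (cont2_swap (pd2 1 G)). apply smooth2_cont, smooth2_pd, HG.
  - apply filter_forall. intro; apply smooth2_exR; auto.
Qed.

Definition FamH (F : fun2) : Prop :=
  exists G K, smooth2 G /\ smooth2 K /\ F = fun x y => IG G x y + K x y.

Lemma FamH_ok F : FamH F -> (forall i x y, ex_pd2 i F x y) /\ (forall x y, continuity_2d_pt F x y)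
     /\ forall i, FamH (pd2 i F).
Proof.
  intros [G [K [HG [HK ->]]]].
  split; [|split].
  - intros [|i] x y; simpl.
    + apply (exd_plus (fun s => IG G s y) (fun s => K s y)). eexists; apply IG_d0; auto.
      apply (smooth2_ex 0), HK.
    + apply (exd_plus (fun s => IG G x s) (fun s => K x s)). eexists; apply IG_d1; auto.
      apply (smooth2_ex 1), HK.
  - intros x y. apply continuity_2d_pt_plus. apply IG_cont. intros; apply smooth2_cont; auto.
    apply smooth2_cont; auto.
  - intros [|i].
    + exists (fun _ _ => 0), (fun x y => G x y + pd2 0 K x y). split; [apply smooth2_const|split].
      apply smooth2_plus; auto. apply smooth2_pd; auto.
      apply functional_extensionality; intro x; apply functional_extensionality; intro y. simpl.
      rewrite (Derive_plus (fun s => IG G s y) (fun s => K s y)).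
      rewrite (is_derive_unique _ _ _ (IG_d0 G x y HG)). unfold IG. rewrite RInt_const.
      simpl. unfold scal; simpl; unfold mult; simpl. ring.
      eexists; apply IG_d0; auto. apply (smooth2_ex 0), HK.
    + exists (pd2 1 G), (pd2 1 K). split; [apply smooth2_pd; auto|split; [apply smooth2_pd; auto|]].
      apply functional_extensionality; intro x; apply functional_extensionality; intro y. simpl.
      rewrite (Derive_plus (fun s => IG G x s) (fun s => K x s)).
      rewrite (is_derive_unique _ _ _ (IG_d1 G x y HG)). reflexivity.
      eexists; apply IG_d1; auto. apply (smooth2_ex 1), HK.
Qed.

Lemma smooth2_IG G : smooth2 G -> smooth2 (IG G).
Proof.
  intros HG. apply (fam2_smooth FamH). apply FamH_ok.
  exists G, (fun _ _ => 0). split; auto. split. apply smooth2_const.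
  apply functional_extensionality; intro x; apply functional_extensionality; intro y. ring.
Qed.

Lemma bound2 f a b c d : a <= b -> c <= d -> (forall x y, continuity_2d_pt f x y) ->
  exists M, forall x y, a <= x <= b -> c <= y <= d -> Rabs (f x y) <= M.
Proof.
  intros Hab Hcd Hf.
  destruct (uniform_continuity_2d f a b c d) with (eps := mkposreal 1 Rlt_0_1) as [dl Hdl].
  { intros; apply Hf. }
  destruct (continuous_ab_maj_consistent (fun s => Rabs (f s c)) a b Hab) as [Mx [HMx _]].
  { intros s _. apply continuous_Rabs_comp. apply cont2_1, Hf. }
  set (M0 := Rabs (f Mx c)).
  pose proof (cond_pos dl) as Hdl0.
  assert (Hind : forall n x y, a <= x <= b -> c <= y <= d -> y <= c + INR n * (dl / 2) ->
     Rabs (f x y) <= M0 + INR n).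
  { induction n as [|n IH]; intros x y Hx Hy Hyn.
    - simpl in *. replace y with c by lra. rewrite Rplus_0_r. apply (HMx x Hx).
    - rewrite S_INR in *. destruct (Rle_dec y (c + INR n * (dl / 2))) as [Hle|Hgt].
      + specialize (IH x y Hx Hy Hle). lra.
      + set (y' := Rmax c (y - dl / 2)).
        assert (Hy1 : c <= y' <= d) by (unfold y'; unfold Rmax; destruct (Rle_dec c (y - dl / 2)); lra).
        assert (Hy2 : y' <= c + INR n * (dl / 2)).
        { unfold y', Rmax; destruct (Rle_dec c (y - dl / 2)). lra. pose proof (pos_INR n).
          assert (0 <= INR n * (dl / 2)) by (apply Rmult_le_pos; lra). lra. }
        assert (Hy3 : Rabs (y - y') < dl).
        { unfold y', Rmax; destruct (Rle_dec c (y - dl / 2)); apply Rabs_def1; lra. }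
        specialize (IH x y' Hx Hy1 Hy2).
        assert (Hc : Rabs (f x y - f x y') < 1).
        { apply (Hdl x y' x y); auto. unfold Rminus; rewrite Rplus_opp_r, Rabs_R0; auto. }
        pose proof (Rabs_triang (f x y - f x y') (f x y')).
        replace (f x y - f x y' + f x y') with (f x y) in H by ring. lra. }
  assert (Hpos : 0 < (dl / 2) / (d - c + 1)) by (apply Rdiv_lt_0_compat; lra).
  destruct (archimed_cor1 _ Hpos) as [N [HN HN0]].
  exists (M0 + INR N). intros x y Hx Hy. apply Hind; auto.
  assert (0 < INR N) by (apply lt_0_INR; auto).
  assert (d - c + 1 <= INR N * (dl / 2)).
  { apply (Rmult_lt_compat_l (INR N)) in HN; auto. rewrite Rinv_r in HN by lra.
    apply (Rmult_lt_compat_r (d - c + 1)) in HN; [|lra].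
    replace (INR N * (dl / 2 / (d - c + 1)) * (d - c + 1)) with (INR N * (dl / 2)) in HN by (field; lra).
    lra. }
  lra.
Qed.

Definition rho (d u : R) := 1 - st (1 - 2 * d / 3) (1 - d / 3) u.
Definition Ecut (d : R) (F0 F1 : fun2) : fun2 := fun x y => rho d (x ^ 2 + y ^ 2) * (F1 x y - F0 x y).

Lemma smooth1_rho d : 0 < d -> smooth1 (rho d).
Proof.
  intros Hd. replace (rho d) with (fun u => 1 + (-1) * st (1 - 2 * d / 3) (1 - d / 3) u).
  apply smooth1_plus. apply smooth1_const. apply smooth1_mult. apply smooth1_const. apply smooth1_st; lra.
  apply functional_extensionality; intro u; unfold rho; ring.
Qed.

Lemma rho_1 d u : 0 < d -> u <= 1 - 2 * d / 3 -> rho d u = 1.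
Proof. intros. unfold rho. rewrite st_left; lra. Qed.
Lemma rho_0 d u : 0 < d -> 1 - d / 3 <= u -> rho d u = 0.
Proof. intros. unfold rho. rewrite st_right; lra. Qed.
Lemma Drho d u : 0 < d -> Derive (rho d) u = - Derive (st (1 - 2 * d / 3) (1 - d / 3)) u.
Proof. intros. unfold rho. rewrite (Derive_minus (fun _ => 1) (st (1 - 2 * d / 3) (1 - d / 3))).
  rewrite Derive_const; ring. apply ex_derive_const. apply smooth1_ex, smooth1_st; lra. Qed.
Lemma Drho_0 d u : 0 < d -> (u < 1 - 2 * d / 3 \/ 1 - d / 3 < u) -> Derive (rho d) u = 0.
Proof. intros Hd [H|H]; rewrite Drho; auto. rewrite Dst_left; lra. rewrite Dst_right; lra. Qed.

Lemma smooth2_Ecut d F0 F1 : 0 < d -> smooth2 F0 -> smooth2 F1 -> smooth2 (Ecut d F0 F1).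
Proof. intros. apply smooth2_mult. apply smooth2_radial, smooth1_rho; auto. apply smooth2_minus; auto. Qed.

Lemma Ecut_disk d F0 F1 x y : 0 < d -> in_disk x y ->
  (1 - d < x ^ 2 + y ^ 2 -> F0 x y = F1 x y) -> Ecut d F0 F1 x y = F1 x y - F0 x y.
Proof.
  intros Hd Hin HF. unfold Ecut. destruct (Rle_dec (x ^ 2 + y ^ 2) (1 - d)).
  rewrite rho_1; auto; lra. rewrite HF; [ring|lra].
Qed.

Lemma Ecut_out d F0 F1 x y : 0 < d <= 1 -> 1 - d < x ^ 2 + y ^ 2 ->
  (in_disk x y -> F0 x y = F1 x y) -> Ecut d F0 F1 x y = 0.
Proof.
  intros Hd Hu HF. unfold Ecut. destruct (Rle_dec (x ^ 2 + y ^ 2) 1).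
  rewrite HF by (unfold in_disk; lra). ring. rewrite rho_0 by lra. ring.
Qed.

Lemma pd_radial0 r F x y : (forall u, ex_derive r u) -> ex_pd2 0 F x y ->
  pd2 0 (fun x y => r (x ^ 2 + y ^ 2) * F x y) x y =
  Derive r (x ^ 2 + y ^ 2) * (2 * x) * F x y + r (x ^ 2 + y ^ 2) * pd2 0 F x y.
Proof.
  intros Hr HF. cbv beta iota delta [pd2 ex_pd2] in *.
  assert (Hc : ex_derive (fun s => s ^ 2 + y ^ 2) x) by (auto_derive; auto).
  rewrite (Derive_mult (fun s => r (s ^ 2 + y ^ 2)) (fun s => F s y)); auto.
  rewrite (Derive_comp r (fun s => s ^ 2 + y ^ 2)); auto.
  replace (Derive (fun s => s ^ 2 + y ^ 2) x) with (2 * x). ring.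
  symmetry; apply is_derive_unique; auto_derive; auto; ring.
  apply (ex_derive_comp r (fun s => s ^ 2 + y ^ 2)); auto.
Qed.

Lemma pd_radial1 r F x y : (forall u, ex_derive r u) -> ex_pd2 1 F x y ->
  pd2 1 (fun x y => r (x ^ 2 + y ^ 2) * F x y) x y =
  Derive r (x ^ 2 + y ^ 2) * (2 * y) * F x y + r (x ^ 2 + y ^ 2) * pd2 1 F x y.
Proof.
  intros Hr HF. cbv beta iota delta [pd2 ex_pd2] in *.
  assert (Hc : ex_derive (fun s => x ^ 2 + s ^ 2) y) by (auto_derive; auto).
  rewrite (Derive_mult (fun s => r (x ^ 2 + s ^ 2)) (fun s => F x s)); auto.
  rewrite (Derive_comp r (fun s => x ^ 2 + s ^ 2)); auto.
  replace (Derive (fun s => x ^ 2 + s ^ 2) y) with (2 * y). ring.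
  symmetry; apply is_derive_unique; auto_derive; auto; ring.
  apply (ex_derive_comp r (fun s => x ^ 2 + s ^ 2)); auto.
Qed.

Lemma pd2_minus i f g x y : ex_pd2 i f x y -> ex_pd2 i g x y ->
  pd2 i (fun x y => f x y - g x y) x y = pd2 i f x y - pd2 i g x y.
Proof.
  destruct i; cbv beta iota delta [pd2 ex_pd2]; intros.
  apply (Derive_minus (fun s => f s y) (fun s => g s y)); auto.
  apply (Derive_minus (fun s => f x s) (fun s => g x s)); auto.
Qed.

Lemma ex_pd2_minus i f g x y : ex_pd2 i f x y -> ex_pd2 i g x y ->
  ex_pd2 i (fun x y => f x y - g x y) x y.
Proof.
  intros H1 H2. replace (fun x y => f x y - g x y) with (fun x y => f x y + (-1) * g x y).
  apply ex_pd2_plus; auto. apply ex_pd2_mult; auto. apply ex_pd2_const.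
  apply functional_extensionality; intro; apply functional_extensionality; intro; ring.
Qed.

Definition HypsB d (P0 Q0 P1 Q1 : fun2) : Prop :=
  smooth2 P0 /\ smooth2 Q0 /\ smooth2 P1 /\ smooth2 Q1 /\ 0 < d <= 1 /\
  (forall x y, in_disk x y -> 1 - d < x ^ 2 + y ^ 2 -> P0 x y = P1 x y /\ Q0 x y = Q1 x y) /\
  (forall x y, in_disk x y -> dcoef2 P0 Q0 x y = dcoef2 P1 Q1 x y /\ dcoef2 P0 Q0 x y > 0).

Lemma curl_Ecut d P0 Q0 P1 Q1 : HypsB d P0 Q0 P1 Q1 ->
  forall s y, pd2 1 (Ecut d P0 P1) s y = pd2 0 (Ecut d Q0 Q1) s y.
Proof.
  intros [HP0 [HQ0 [HP1 [HQ1 [Hd [Hbd Hcurl]]]]]] s y.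
  assert (Hr : forall u, ex_derive (rho d) u) by (apply smooth1_ex, smooth1_rho; lra).
  unfold Ecut. rewrite pd_radial1, pd_radial0; auto.
  2: apply ex_pd2_minus; apply smooth2_ex; auto.
  2: apply ex_pd2_minus; apply smooth2_ex; auto.
  rewrite !pd2_minus; try apply smooth2_ex; auto.
  destruct (Rle_dec (s ^ 2 + y ^ 2) 1) as [Hin|Hout].
  - destruct (Hcurl s y Hin) as [Hc _]. unfold dcoef2 in Hc.
    assert (Hc' : pd2 0 Q1 s y - pd2 0 Q0 s y = pd2 1 P1 s y - pd2 1 P0 s y) by lra.
    rewrite Hc'.
    destruct (Rle_dec (s ^ 2 + y ^ 2) (1 - d)).
    + rewrite Drho_0; [ring|lra|left; lra].
    + destruct (Hbd s y Hin) as [E1 E2]; [lra|]. rewrite E1, E2. ring.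
  - rewrite Drho_0, rho_0. all: try lra. all: try ring. all: try (right; lra).
Qed.

Definition Hpot d (P0 P1 : fun2) := IG (Ecut d P0 P1).

Lemma Hpot_d0 d P0 Q0 P1 Q1 x y : HypsB d P0 Q0 P1 Q1 ->
  is_derive (fun s => Hpot d P0 P1 s y) x (Ecut d P0 P1 x y).
Proof.
  intros (HP0 & HQ0 & HP1 & HQ1 & Hd & _). apply IG_d0. apply smooth2_Ecut; auto; lra.
Qed.

Lemma Hpot_d1 d P0 Q0 P1 Q1 x y : HypsB d P0 Q0 P1 Q1 ->
  is_derive (fun s => Hpot d P0 P1 x s) y (Ecut d Q0 Q1 x y).
Proof.
  intros HH. pose proof HH as (HP0 & HQ0 & HP1 & HQ1 & Hd & Hbd & _).
  assert (HE1 : smooth2 (Ecut d P0 P1)) by (apply smooth2_Ecut; auto; lra).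
  assert (HE2 : smooth2 (Ecut d Q0 Q1)) by (apply smooth2_Ecut; auto; lra).
  eapply isd_eq. apply IG_d1; auto. unfold IG.
  rewrite (RInt_ext _ (fun s => pd2 0 (Ecut d Q0 Q1) s y)).
  2: intros; apply curl_Ecut; auto.
  change (RInt (Derive (fun s => Ecut d Q0 Q1 s y)) (-2) x = Ecut d Q0 Q1 x y).
  rewrite RInt_Derive.
  rewrite (Ecut_out d Q0 Q1 (-2) y). rewrite Rminus_0_r; reflexivity. lra. pose proof (pow2_ge_0 y). lra.
  intros Hin; unfold in_disk in Hin; pose proof (pow2_ge_0 y); lra.
  intros; apply (smooth2_ex 0); auto.
  intros; apply (cont2_1 (pd2 0 (Ecut d Q0 Q1))). apply smooth2_cont, smooth2_pd; auto.
Qed.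

Lemma RInt_zero (f : R -> R) a b : (forall s, Rmin a b < s < Rmax a b -> f s = 0) -> RInt f a b = 0.
Proof.
  intros H. rewrite (RInt_ext f (fun _ => 0)) by auto. rewrite RInt_const.
  unfold scal; simpl; unfold mult; simpl. ring.
Qed.

Lemma EcutP_out d P0 Q0 P1 Q1 s y : HypsB d P0 Q0 P1 Q1 -> 1 - d < s ^ 2 + y ^ 2 -> Ecut d P0 P1 s y = 0.
Proof.
  intros (HP0 & HQ0 & HP1 & HQ1 & Hd & Hbd & _) Hu. apply Ecut_out; auto.
  intros Hin. apply (Hbd s y Hin Hu).
Qed.
Lemma EcutQ_out d P0 Q0 P1 Q1 s y : HypsB d P0 Q0 P1 Q1 -> 1 - d < s ^ 2 + y ^ 2 -> Ecut d Q0 Q1 s y = 0.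
Proof.
  intros (HP0 & HQ0 & HP1 & HQ1 & Hd & Hbd & _) Hu. apply Ecut_out; auto.
  intros Hin. apply (Hbd s y Hin Hu).
Qed.

Lemma Hpot_edge d P0 Q0 P1 Q1 y : HypsB d P0 Q0 P1 Q1 -> Hpot d P0 P1 2 y = 0.
Proof.
  intros HH. pose proof HH as (HP0 & HQ0 & HP1 & HQ1 & Hd & _).
  set (phi := fun v => Hpot d P0 P1 2 v).
  assert (Hd0 : forall v, is_derive phi v 0).
  { intro v. eapply isd_eq. apply (Hpot_d1 d P0 Q0 P1 Q1 2 v HH).
    apply (EcutQ_out d P0 Q0 P1 Q1); auto. pose proof (pow2_ge_0 v); lra. }
  assert (HD : forall v, Derive phi v = 0) by (intro v; apply is_derive_unique, Hd0).
  assert (Hc : phi y - phi 2 = 0).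
  { rewrite <- RInt_Derive. apply RInt_zero. intros; apply HD.
    intros; eexists; apply Hd0.
    intros. apply (continuous_ext (fun _ => 0)). intro; symmetry; apply HD. apply continuous_const. }
  assert (H2 : phi 2 = 0).
  { unfold phi, Hpot, IG. apply RInt_zero. intros s _. apply (EcutP_out d P0 Q0 P1 Q1); auto.
    pose proof (pow2_ge_0 s); lra. }
  unfold phi in *. lra.
Qed.

Lemma Hpot_zero d P0 Q0 P1 Q1 x y : HypsB d P0 Q0 P1 Q1 -> 1 - d < x ^ 2 + y ^ 2 -> Hpot d P0 P1 x y = 0.
Proof.
  intros HH Hu. pose proof HH as (HP0 & HQ0 & HP1 & HQ1 & Hd & _).
  assert (HE : smooth2 (Ecut d P0 P1)) by (apply smooth2_Ecut; auto; lra).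
  destruct (Rle_dec x 0) as [Hx|Hx].
  - unfold Hpot, IG. apply RInt_zero. intros s Hs. apply (EcutP_out d P0 Q0 P1 Q1); auto.
    unfold Rmin, Rmax in Hs. destruct (Rle_dec (-2) x).
    assert (0 <= (x - s) * (-(x + s))) by (apply Rmult_le_pos; lra). nra.
    assert (0 <= (-2 - s) * (-(s + 2))) by (apply Rmult_le_pos; lra). pose proof (pow2_ge_0 y). nra.
  - unfold Hpot, IG.
    assert (Hz : RInt (fun s => Ecut d P0 P1 s y) x 2 = 0).
    { apply RInt_zero. intros s Hs. apply (EcutP_out d P0 Q0 P1 Q1); auto.
      unfold Rmin, Rmax in Hs. destruct (Rle_dec x 2).
      assert (0 <= (s - x) * (s + x)) by (apply Rmult_le_pos; lra). nra.
      assert (0 <= (s - 2) * (s + 2)) by (apply Rmult_le_pos; lra). pose proof (pow2_ge_0 y). nra. }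
    pose proof (Hpot_edge d P0 Q0 P1 Q1 y HH) as He. unfold Hpot, IG in He.
    rewrite <- (RInt_ChaslesR _ (-2) x 2) in He by (apply smooth2_exR; auto). lra.
Qed.

Lemma Derive_eqR (f : R -> R) (x l : R) : is_derive f x l -> Derive f x = l.
Proof. apply is_derive_unique. Qed.

Definition aF eps (chi : R -> R) (H : fun2) : fun3 := fun t x y => 1 * 1 + eps * Derive chi t * H x y.
Definition bF eps (chi : R -> R) (F0 F1 : fun2) : fun3 :=
  fun t x y => eps * (1 - chi t) * F0 x y + eps * chi t * F1 x y.

Lemma pd3_0_b eps (chi : R -> R) F0 F1 (t x y : R) : ex_derive chi t ->
  pd3 0 (bF eps chi F0 F1) t x y = eps * Derive chi t * (F1 x y - F0 x y).
Proof. intros Hc. cbv beta iota delta [pd3 bF]. apply Derive_eqR. auto_derive; auto. change (Derive (fun x0 : R => chi x0) t) with (Derive chi t). ring. Qed.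

Lemma pd3_1_b eps (chi : R -> R) F0 F1 (t x y : R) : ex_pd2 0 F0 x y -> ex_pd2 0 F1 x y ->
  pd3 1 (bF eps chi F0 F1) t x y = eps * (1 - chi t) * pd2 0 F0 x y + eps * chi t * pd2 0 F1 x y.
Proof. intros H0 H1. cbv beta iota delta [pd3 bF pd2 ex_pd2] in *. apply Derive_eqR. auto_derive; auto. ring. Qed.

Lemma pd3_2_b eps (chi : R -> R) F0 F1 (t x y : R) : ex_pd2 1 F0 x y -> ex_pd2 1 F1 x y ->
  pd3 2 (bF eps chi F0 F1) t x y = eps * (1 - chi t) * pd2 1 F0 x y + eps * chi t * pd2 1 F1 x y.
Proof. intros H0 H1. cbv beta iota delta [pd3 bF pd2 ex_pd2] in *. apply Derive_eqR. auto_derive; auto. ring. Qed.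

Lemma pd3_1_a eps (chi : R -> R) H (t x y : R) : ex_pd2 0 H x y ->
  pd3 1 (aF eps chi H) t x y = eps * Derive chi t * pd2 0 H x y.
Proof. intros H0. cbv beta iota delta [pd3 aF pd2 ex_pd2] in *. apply Derive_eqR. auto_derive; auto. ring. Qed.

Lemma pd3_2_a eps (chi : R -> R) H (t x y : R) : ex_pd2 1 H x y ->
  pd3 2 (aF eps chi H) t x y = eps * Derive chi t * pd2 1 H x y.
Proof. intros H0. cbv beta iota delta [pd3 aF pd2 ex_pd2] in *. apply Derive_eqR. auto_derive; auto. ring. Qed.

Lemma dform_simpl a b c t x y A B C u0 u1 u2 v0 v1 v2 :
  pd3 0 b t x y - pd3 1 a t x y = A -> pd3 0 c t x y - pd3 2 a t x y = B ->
  pd3 1 c t x y - pd3 2 b t x y = C ->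
  dform_eval a b c t x y (u0, u1, u2) (v0, v1, v2) =
  A * (u0 * v1 - u1 * v0) + B * (u0 * v2 - u2 * v0) + C * (u1 * v2 - u2 * v1).
Proof. intros HA HB HC. cbv beta iota zeta delta [dform_eval]. rewrite HA, HB, HC. reflexivity. Qed.

Lemma smooth1_minus f g : smooth1 f -> smooth1 g -> smooth1 (fun t => f t - g t).
Proof. intros. replace (fun t => f t - g t) with (fun t => f t + (-1) * g t).
  apply smooth1_plus; auto. apply (smooth1_mult (fun _ => -1)); auto. apply smooth1_const.
  apply functional_extensionality; intro; ring. Qed.

Theorem lemma3p10 (P0 Q0 P1 Q1 : fun2) :
  smooth2 P0 -> smooth2 Q0 -> smooth2 P1 -> smooth2 Q1 ->
  (exists d : R, d > 0 /\
     forall x y, in_disk x y -> 1 - d < x ^ 2 + y ^ 2 ->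
       P0 x y = P1 x y /\ Q0 x y = Q1 x y) ->
  (forall x y, in_disk x y ->
     dcoef2 P0 Q0 x y = dcoef2 P1 Q1 x y /\ dcoef2 P0 Q0 x y > 0) ->
  exists (a b c : fun3) (Rv : R -> R -> R -> vec3) (eps : R),
    smooth3 a /\ smooth3 b /\ smooth3 c /\
    is_contact_cyl a b c /\
    is_reeb_cyl a b c Rv /\
    eps > 0 /\
    (exists d : R, d > 0 /\
       forall t x y, in_cyl t x y -> t < -1 + d ->
         a t x y = 1 /\ b t x y = eps * P0 x y /\ c t x y = eps * Q0 x y) /\
    (exists d : R, d > 0 /\
       forall t x y, in_cyl t x y -> 1 - d < t ->
         a t x y = 1 /\ b t x y = eps * P1 x y /\ c t x y = eps * Q1 x y) /\
    (forall t x y, in_cyl t x y ->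
       exists r : R, Rv t x y = (r, 0, 0)) /\
    (exists d : R, d > 0 /\
       forall t x y, in_cyl t x y -> 1 - d < x ^ 2 + y ^ 2 ->
         Rv t x y = (1, 0, 0)).
Proof.
  intros HP0 HQ0 HP1 HQ1 [d0 [Hd0 Hbd0]] Hcurl.
  set (d := Rmin d0 1).
  assert (Hd : 0 < d <= 1) by (unfold d; split; [apply Rmin_pos; lra|apply Rmin_r]).
  assert (HH : HypsB d P0 Q0 P1 Q1).
  { refine (conj HP0 (conj HQ0 (conj HP1 (conj HQ1 (conj Hd (conj _ Hcurl)))))).
    intros x y Hin Hu; apply Hbd0; auto. pose proof (Rmin_l d0 1). fold d in H. lra. }
  assert (Hbd : forall x y, in_disk x y -> 1 - d < x ^ 2 + y ^ 2 -> P0 x y = P1 x y /\ Q0 x y = Q1 x y)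
    by apply HH.
  set (chi := st (-1/2) (1/2)).
  assert (Hchi : smooth1 chi) by (apply smooth1_st; lra).
  set (H := Hpot d P0 P1).
  assert (HsH : smooth2 H) by (apply smooth2_IG, smooth2_Ecut; auto; lra).
  destruct (continuous_ab_maj_consistent (fun t => Rabs (Derive chi t)) (-1) 1) as [tm [Htm _]]; [lra| |].
  { intros t _. apply continuous_Rabs_comp. apply smooth1_cont, smooth1_Derive, Hchi. }
  set (Cc := Rabs (Derive chi tm)).
  destruct (bound2 H (-1) 1 (-1) 1) as [MH HMH]; try lra.
  { intros; apply smooth2_cont, HsH. }
  assert (HMH0 : 0 <= MH) by (pose proof (HMH 0 0) as h; pose proof (Rabs_pos (H 0 0)); apply Rle_trans with (Rabs (H 0 0)); auto; apply h; lra).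
  assert (HC0 : 0 <= Cc) by apply Rabs_pos.
  set (eps := / (2 * (Cc * MH + 1))).
  assert (Heps : 0 < eps) by (unfold eps; apply Rinv_0_lt_compat; nra).
  assert (Hdisk : forall x y, in_disk x y -> -1 <= x <= 1 /\ -1 <= y <= 1).
  { intros x y Hin. unfold in_disk in Hin. pose proof (pow2_ge_0 x); pose proof (pow2_ge_0 y).
    split; split; nra. }
  assert (Hsmall : forall t x y, in_cyl t x y -> Rabs (eps * Derive chi t * H x y) < 1 / 2).
  { intros t x y [Ht Hin]. destruct (Hdisk x y Hin) as [Hx Hy].
    rewrite !Rabs_mult, (Rabs_pos_eq eps) by lra.
    pose proof (Htm t Ht) as h1. simpl in h1. fold Cc in h1.
    pose proof (HMH x y Hx Hy) as h2.
    pose proof (Rabs_pos (Derive chi t)); pose proof (Rabs_pos (H x y)).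
    apply Rle_lt_trans with (eps * (Cc * MH)).
    rewrite Rmult_assoc. apply Rmult_le_compat_l; [lra|]. apply Rmult_le_compat; auto.
    unfold eps. apply (Rmult_lt_reg_r (2 * (Cc * MH + 1))); [nra|].
    field_simplify; nra. }
  set (a := aF eps chi H).
  set (b := bF eps chi P0 P1).
  set (c := bF eps chi Q0 Q1).
  assert (Hapos : forall t x y, in_cyl t x y -> 1 / 2 < a t x y).
  { intros t x y Hc. specialize (Hsmall t x y Hc). unfold a, aF. apply Rabs_def2 in Hsmall. lra. }
  assert (HEP : forall x y, in_disk x y -> pd2 0 H x y = P1 x y - P0 x y).
  { intros x y Hin. unfold H. transitivity (Ecut d P0 P1 x y). apply Derive_eqR, (Hpot_d0 d P0 Q0 P1 Q1 x y HH).
    apply Ecut_disk; try lra; auto. intros Hu; apply (Hbd x y Hin Hu). }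
  assert (HEQ : forall x y, in_disk x y -> pd2 1 H x y = Q1 x y - Q0 x y).
  { intros x y Hin. unfold H. transitivity (Ecut d Q0 Q1 x y). apply Derive_eqR, (Hpot_d1 d P0 Q0 P1 Q1 x y HH).
    apply Ecut_disk; try lra; auto. intros Hu; apply (Hbd x y Hin Hu). }
  assert (HA : forall t x y, in_cyl t x y -> pd3 0 b t x y - pd3 1 a t x y = 0).
  { intros t x y [_ Hin]. unfold a, b. rewrite pd3_0_b, pd3_1_a, HEP; auto. ring.
    apply (smooth2_ex 0); auto. apply smooth1_ex; auto. }
  assert (HB : forall t x y, in_cyl t x y -> pd3 0 c t x y - pd3 2 a t x y = 0).
  { intros t x y [_ Hin]. unfold a, c. rewrite pd3_0_b, pd3_2_a, HEQ; auto. ring.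
    apply (smooth2_ex 1); auto. apply smooth1_ex; auto. }
  assert (HCe : forall t x y, in_cyl t x y -> pd3 1 c t x y - pd3 2 b t x y = eps * dcoef2 P0 Q0 x y).
  { intros t x y [_ Hin]. unfold b, c. rewrite pd3_1_b, pd3_2_b; try apply smooth2_ex; auto.
    destruct (Hcurl x y Hin) as [Hc1 _]. unfold dcoef2 in Hc1 |- *.
    replace (eps * (1 - chi t) * pd2 0 Q0 x y + eps * chi t * pd2 0 Q1 x y -
      (eps * (1 - chi t) * pd2 1 P0 x y + eps * chi t * pd2 1 P1 x y))
      with (eps * (1 - chi t) * (pd2 0 Q0 x y - pd2 1 P0 x y) + eps * chi t * (pd2 0 Q1 x y - pd2 1 P1 x y))
      by ring.
    rewrite <- Hc1. ring. }
  exists a, b, c, (fun t x y => (/ a t x y, 0, 0)), eps.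
  split; [|split; [|split; [|split; [|split; [|split; [|split; [|split; [|split]]]]]]]].
  - unfold a, aF. apply (smooth3_sep (fun _ => 1) (fun t => eps * Derive chi t) (fun _ _ => 1) H).
    apply smooth1_const. apply (smooth1_mult (fun _ => eps)). apply smooth1_const. apply smooth1_Derive; auto.
    apply smooth2_const. auto.
  - unfold b, bF. apply (smooth3_sep (fun t => eps * (1 - chi t)) (fun t => eps * chi t) P0 P1); auto.
    apply (smooth1_mult (fun _ => eps)). apply smooth1_const. apply (smooth1_minus (fun _ => 1)); auto. apply smooth1_const.
    apply (smooth1_mult (fun _ => eps)); auto. apply smooth1_const.
  - unfold c, bF. apply (smooth3_sep (fun t => eps * (1 - chi t)) (fun t => eps * chi t) Q0 Q1); auto.
    apply (smooth1_mult (fun _ => eps)). apply smooth1_const. apply (smooth1_minus (fun _ => 1)); auto. apply smooth1_const.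
    apply (smooth1_mult (fun _ => eps)); auto. apply smooth1_const.
  - intros t x y Hc. unfold contact_density, e_t, e_x, e_y.
    rewrite !(dform_simpl a b c t x y 0 0 (eps * dcoef2 P0 Q0 x y)); auto.
    cbv beta iota zeta delta [form_eval].
    destruct Hc as [Ht Hin]. destruct (Hcurl x y Hin) as [_ Hpos].
    pose proof (Hapos t x y (conj Ht Hin)).
    replace (a t x y * 1 + b t x y * 0 + c t x y * 0) with (a t x y) by ring.
    ring_simplify. apply Rmult_lt_0_compat; [|lra]. apply Rmult_lt_0_compat; lra.
  - intros t x y Hc. pose proof (Hapos t x y Hc). split.
    + cbv beta iota zeta delta [form_eval]. field. lra.
    + intros [[v0 v1] v2]. rewrite (dform_simpl a b c t x y 0 0 (eps * dcoef2 P0 Q0 x y)); auto. ring.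
  - lra.
  - exists (1/4). split; [lra|]. intros t x y [Ht _] Htd.
    assert (Hc0 : chi t = 0) by (apply st_left; lra).
    assert (Hd0' : Derive chi t = 0) by (apply Dst_left; lra).
    unfold a, b, c, aF, bF. rewrite Hc0, Hd0'. repeat split; ring.
  - exists (1/4). split; [lra|]. intros t x y [Ht _] Htd.
    assert (Hc0 : chi t = 1) by (apply st_right; lra).
    assert (Hd0' : Derive chi t = 0) by (apply Dst_right; lra).
    unfold a, b, c, aF, bF. rewrite Hc0, Hd0'. repeat split; ring.
  - intros t x y _. eexists; reflexivity.
  - exists d. split; [lra|]. intros t x y _ Hu.
    assert (HH0 : H x y = 0) by (apply (Hpot_zero d P0 Q0 P1 Q1); auto).
    unfold a, aF. rewrite HH0. replace (1 * 1 + eps * Derive chi t * 0) with 1 by ring.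
    rewrite Rinv_1. reflexivity.
Qed.
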